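(* Let $V:[0,+\infty)\to[0,+\infty)$ be a $C^1$ strictly increasing function with $\lim_{t\to\infty}V(t)=+\infty$, and let $S:=V'$. Let $(a_n)_{n\in\mathbb N}$ be a strictly decreasing sequence converging to $0$, and let $f:(0,+\infty)\to\mathbb R$ be a positive increasing $C^2$ function such that $\lim_{s\to\infty}f(s)=+\infty$, and such that for every $r>1$: $\lim_{s\to\infty}\frac{s f'(s)}{[f(s)]^r}=0$ and $s\mapsto\frac{f'(s)}{[f(s)]^r}$ is strictly decreasing. Define $\tilde\rho_n:(0,+\infty)\to\mathbb R$ by \[ \tilde\rho_n(t):=\frac{a_n\,f'(V(t))}{[f(V(t))]^{a_n+1}}. \] Then the functions $\tilde\rho_n$ belong to $C^1(0,+\infty)$, are strictly decreasing, and satisfy: (i) $\lim_{n\to\infty}\tilde\rho_n(r)=0$ for all $r>0$ and $\lim_{r\to+\infty}\tilde\rho_n(r)V(r)=0$ for all $n$; (ii) for all $n>m$, $r\mapsto\tilde\rho_n(r)/\tilde\rho_m(r)$ is non-decreasing on $(0,+\infty)$; (iii) $\lim_{R\to+\infty}\lim_{n\to\infty}\int_R^{+\infty}S(r)\tilde\rho_n(r)\,\mathrm dr=1$. Consequently, on any metric measure space $(X,\mathsf d,\mathfrak m)$ the mollifiers $\rho_n(x,y):=\tilde\rho_n(\mathsf d(x,y))$, $x\neq y$, satisfy approximation of the identity of radial type associated to $V$.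
   Context: Approximation of the identity of radial type associated to $V$ for functions $\rho_n$ on $\{(x,y)\in X\times X:x\neq y\}$ means: there are strictly decreasing $\tilde\rho_n\in C^1(0,+\infty)$ with $\rho_n(x,y)=\tilde\rho_n(\mathsf d(x,y))$ satisfying properties (i), (ii), (iii) listed in the claim. *)

(* Defs.v *)
From Stdlib Require Import Reals.
From Coquelicot Require Import Coquelicot.
Open Scope R_scope.

Definition C1_pos (g : R -> R) : Prop :=
  forall t, 0 < t -> ex_derive g t /\ continuous (Derive g) t.

Definition C2_pos (g : R -> R) : Prop :=
  forall t, 0 < t -> ex_derive g t /\ ex_derive (Derive g) t
                    /\ continuous (Derive (Derive g)) t.

Definition C1_nonneg (g : R -> R) : Prop :=
  C1_pos g /\
  exists S0 : R,
    filterlim (fun h => (g h - g 0) / h) (at_right 0) (locally S0) /\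
    filterlim (Derive g) (at_right 0) (locally S0).

(* The properties of the radial profiles rt n : (0,+oo) -> R required in
   "approximation of the identity of radial type associated to V"
   (with S = V' = Derive V). *)
Definition radial_profiles (V : R -> R) (rt : nat -> R -> R) : Prop :=
  (forall n, C1_pos (rt n)) /\
  (forall n s t, 0 < s -> s < t -> rt n t < rt n s) /\
  (forall r, 0 < r -> is_lim_seq (fun n => rt n r) 0) /\
  (forall n, is_lim (fun r => rt n r * V r) p_infty 0) /\
  (forall n m, (m < n)%nat -> forall r1 r2, 0 < r1 -> r1 <= r2 ->
       rt n r1 / rt m r1 <= rt n r2 / rt m r2) /\
  (exists (I : R -> nat -> R) (L : R -> R),
     (forall Rr n, 0 < Rr ->
        is_RInt_gen (fun r => Derive V r * rt n r)
                    (at_point Rr) (Rbar_locally p_infty) (I Rr n)) /\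
     (forall Rr, 0 < Rr -> is_lim_seq (I Rr) (L Rr)) /\
     is_lim L p_infty 1).

Definition is_metric {X : Type} (d : X -> X -> R) : Prop :=
  (forall x y, 0 <= d x y) /\
  (forall x y, d x y = 0 <-> x = y) /\
  (forall x y, d x y = d y x) /\
  (forall x y z, d x z <= d x y + d y z).

Definition approx_identity_radial {X : Type} (d : X -> X -> R) (V : R -> R)
  (rho : nat -> X -> X -> R) : Prop :=
  exists rt : nat -> R -> R,
    radial_profiles V rt /\
    (forall n x y, x <> y -> rho n x y = rt n (d x y)).

(* Main.v *)
Require Import Defs.
From Stdlib Require Import Reals Lra Lia.
From Coquelicot Require Import Coquelicot.
Open Scope R_scope.

Lemma a_pos (a : nat -> R) : (forall n, a (S n) < a n) -> is_lim_seq a 0 -> forall n, 0 < a n.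
Proof.
intros Hd Hl n. destruct (Rlt_or_le 0 (a n)) as [H|H]; [exact H|exfalso].
assert (Hm : forall m, a (m + S n)%nat <= a (S n)).
{ induction m. simpl. lra. simpl. specialize (Hd (m + S n)%nat). lra. }
pose proof (proj1 (is_lim_seq_incr_n a (S n) 0) Hl) as Hl'.
pose proof (is_lim_seq_le _ _ _ _ Hm Hl' (is_lim_seq_const (a (S n)))) as Hle.
simpl in Hle. specialize (Hd n). lra.
Qed.

Lemma deriv_nonneg (f : R -> R) s : 0 < s -> (forall x y, 0 < x -> x <= y -> f x <= f y) ->
  ex_derive f s -> 0 <= Derive f s.
Proof.
intros Hs Hinc Hd. pose proof (Derive_correct f s Hd) as H.
apply is_derive_Reals in H.
destruct (Rlt_or_le (Derive f s) 0) as [Hn|Hn]; [exfalso|exact Hn].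
destruct (H (- Derive f s) ltac:(lra)) as [del Hdel].
set (h := Rmin (del/2) (s/2)).
assert (Hh : 0 < h) by (unfold h; apply Rmin_pos; pose proof (cond_pos del); lra).
assert (Hh2 : h <= del/2) by apply Rmin_l.
assert (Hq : 0 <= (f (s + h) - f s) / h).
{ unfold Rdiv. apply Rmult_le_pos. assert (f s <= f (s+h)) by (apply Hinc; lra). lra.
  left; apply Rinv_0_lt_compat; lra. }
assert (Hab : Rabs h < del) by (rewrite Rabs_pos_eq; pose proof (cond_pos del); lra).
specialize (Hdel h ltac:(lra) Hab).
revert Hdel. apply Rle_not_lt.
rewrite Rabs_pos_eq; lra.
Qed.

Lemma cont_pt (g : R -> R) x : continuous g x <-> continuity_pt g x.
Proof. rewrite continuity_pt_filterlim. reflexivity. Qed.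

Section S.
Variables (f V : R -> R) (c : R).
Hypothesis Hf : forall s, 0 < s -> ex_derive f s /\ ex_derive (Derive f) s /\ continuous (Derive (Derive f)) s.
Hypothesis HV : forall t, 0 < t -> ex_derive V t /\ continuous (Derive V) t.
Hypothesis HVp : forall t, 0 < t -> 0 < V t.
Hypothesis Hfp : forall s, 0 < s -> 0 < f s.

Definition g t := c * Derive f (V t) / Rpower (f (V t)) (c+1).
Definition Q1 s := c / exp ((c+1) * ln (f s)).
Definition Q2 s := - c * Derive f s * (c+1) * (Derive f s / f s) / exp ((c+1) * ln (f s)).
Definition E t := Derive (Derive f) (V t) * Derive V t * Q1 (V t) + Derive V t * Q2 (V t).

Lemma g_derive t : 0 < t -> is_derive g t (E t).
Proof.
intros Ht. destruct (HV t Ht) as [HV1 _]. pose proof (HVp t Ht) as Hv.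
destruct (Hf _ Hv) as [Hf1 [Hf2 _]]. pose proof (Hfp _ Hv) as Hfv.
pose proof (exp_pos ((c+1) * ln (f (V t)))).
unfold g, Rpower, E, Q1, Q2. auto_derive.
- repeat split; auto. lra.
- change (fun x => V x) with V; change (fun x => Derive f x) with (Derive f); change (fun x => f x) with f.
  set (e := exp _). field. split; [lra | unfold e; lra].
Qed.

Lemma E_cont t : 0 < t -> continuous E t.
Proof.
intros Ht. destruct (HV t Ht) as [HV1 HV2]. pose proof (HVp t Ht) as Hv.
destruct (Hf _ Hv) as [Hf1 [Hf2 Hf3]]. pose proof (Hfp _ Hv) as Hfv.
pose proof (exp_pos ((c+1) * ln (f (V t)))).
assert (CV : continuous V t) by exact (ex_derive_continuous V t HV1).
assert (C1 : continuous Q1 (V t)).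
{ apply (ex_derive_continuous (Q1)). unfold Q1. auto_derive. repeat split; auto; lra. }
assert (C2 : continuous Q2 (V t)).
{ apply (ex_derive_continuous (Q2)). unfold Q2. auto_derive. repeat split; auto; lra. }
unfold E.
apply (continuous_plus (fun t => Derive (Derive f) (V t) * Derive V t * Q1 (V t)) (fun t => Derive V t * Q2 (V t))).
- apply (continuous_mult (fun t => Derive (Derive f) (V t) * Derive V t) (fun t => Q1 (V t))).
  + apply (continuous_mult (fun t => Derive (Derive f) (V t)) (Derive V)); auto.
    apply (continuous_comp V (Derive (Derive f))); auto.
  + apply (continuous_comp V Q1); auto.
- apply (continuous_mult (Derive V) (fun t => Q2 (V t))); auto.
  apply (continuous_comp V Q2); auto.
Qed.

Lemma g_C1 : forall t, 0 < t -> ex_derive g t /\ continuous (Derive g) t.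
Proof.
intros t Ht. split. exists (E t). apply g_derive; auto.
apply (continuous_ext_loc _ E).
- apply (locally_interval _ t 0 p_infty). simpl; auto. simpl; auto.
  intros y Hy _. simpl in Hy. symmetry. apply is_derive_unique, g_derive; auto.
- apply E_cont; auto.
Qed.

Lemma g_cont t : 0 < t -> continuous g t.
Proof. intros Ht. apply (ex_derive_continuous g). apply g_C1; auto. Qed.

Definition F t := - exp (- c * ln (f (V t))).

Lemma F_derive t : 0 < t -> is_derive F t (Derive V t * g t).
Proof.
intros Ht. destruct (HV t Ht) as [HV1 _]. pose proof (HVp t Ht) as Hv.
destruct (Hf _ Hv) as [Hf1 [Hf2 _]]. pose proof (Hfp _ Hv) as Hfv.
unfold F, g, Rpower. auto_derive.
- repeat split; auto.
- change (fun x => V x) with V; change (fun x => f x) with f.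
  replace ((c + 1) * ln (f (V t))) with (c * ln (f (V t)) + ln (f (V t))) by ring.
  replace (- c * ln (f (V t))) with (- (c * ln (f (V t)))) by ring.
  rewrite exp_plus, exp_ln, exp_Ropp by lra.
  pose proof (exp_pos (c * ln (f (V t)))).
  field. split; lra.
Qed.

Lemma F_lim (Hc : 0 < c) (HVl : is_lim V p_infty p_infty) (Hfl : is_lim f p_infty p_infty) :
  is_lim F p_infty 0.
Proof.
assert (L1 : is_lim (fun t => f (V t)) p_infty p_infty).
{ apply (is_lim_comp f V p_infty p_infty p_infty); auto. exists 0; intros; discriminate. }
assert (L2 : is_lim (fun t => ln (f (V t))) p_infty p_infty).
{ apply (is_lim_comp ln (fun t => f (V t)) p_infty p_infty p_infty); auto.
  apply is_lim_ln_p. exists 0; intros; discriminate. }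
assert (L3 : is_lim (fun t => - c * ln (f (V t))) p_infty m_infty).
{ replace m_infty with (Rbar_mult (-c) p_infty). apply is_lim_scal_l; auto.
  simpl. destruct (Rle_dec 0 (-c)). exfalso; lra. reflexivity. }
assert (L4 : is_lim (fun t => exp (- c * ln (f (V t)))) p_infty 0).
{ apply (is_lim_comp exp (fun t => - c * ln (f (V t))) p_infty 0 m_infty); auto.
  apply is_lim_exp_m. exists 0; intros; discriminate. }
unfold F. replace (Finite 0) with (Rbar_opp 0). apply is_lim_opp; auto.
simpl. rewrite Ropp_0. reflexivity.
Qed.

Lemma F_C1 t : 0 < t -> ex_derive F t /\ continuous (Derive F) t.
Proof.
intros Ht. split. exists (Derive V t * g t). apply F_derive; auto.
apply (continuous_ext_loc _ (fun t => Derive V t * g t)).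
- apply (locally_interval _ t 0 p_infty). simpl; auto. simpl; auto.
  intros y Hy _. simpl in Hy. symmetry. apply is_derive_unique, F_derive; auto.
- apply (continuous_mult (Derive V) g). apply HV; auto. apply g_cont; auto.
Qed.

Lemma integral (Hc : 0 < c) (HVl : is_lim V p_infty p_infty) (Hfl : is_lim f p_infty p_infty) Rr :
  0 < Rr -> is_RInt_gen (fun r => Derive V r * g r) (at_point Rr) (Rbar_locally p_infty)
    (Rpower (f (V Rr)) (-c)).
Proof.
intros HR.
assert (Hfq : forall P : R * R -> Prop, (forall y, Rr < y -> P (Rr, y)) ->
   filter_prod (at_point Rr) (Rbar_locally p_infty) P).
{ intros P HPy. apply (Filter_prod _ _ _ (fun x => x = Rr) (fun y => Rr < y)).
  reflexivity. exists Rr. auto. intros x y -> Hy. auto. }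
apply (is_RInt_gen_ext (Derive F)).
- apply Hfq. intros y Hy x Hx. simpl in Hx. rewrite Rmin_left in Hx by lra.
  apply is_derive_unique, F_derive. lra.
- replace (Rpower (f (V Rr)) (-c)) with (0 - F Rr).
  2:{ unfold F, Rpower. replace (- c * ln (f (V Rr))) with (- c * ln (f (V Rr))) by ring. ring. }
  apply is_RInt_gen_Derive.
  + apply Hfq. intros y Hy x Hx. simpl in Hx. rewrite Rmin_left in Hx by lra. apply F_C1. lra.
  + apply Hfq. intros y Hy x Hx. simpl in Hx. rewrite Rmin_left in Hx by lra. apply F_C1. lra.
  + intros P HP0. unfold filtermap, at_point. apply locally_singleton. exact HP0.
  + apply F_lim; auto.
Qed.
End S.

Lemma a_lt (a : nat -> R) : (forall n, a (S n) < a n) -> forall m n, (m < n)%nat -> a n < a m.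
Proof.
intros Hd m n. induction n; intros H. lia.
destruct (Nat.eq_dec m n) as [->|Hne]. apply Hd.
specialize (IHn ltac:(lia)). specialize (Hd n). lra.
Qed.

Theorem mainTheorem3
  (V : R -> R) (a : nat -> R) (f : R -> R)
  (HV0 : forall t, 0 <= t -> 0 <= V t)
  (HVC1 : C1_nonneg V)
  (HVinc : forall s t, 0 <= s -> s < t -> V s < V t)
  (HVlim : is_lim V p_infty p_infty)
  (Hadec : forall n, a (S n) < a n)
  (Halim : is_lim_seq a 0)
  (Hfpos : forall s, 0 < s -> 0 < f s)
  (Hfinc : forall s t, 0 < s -> s <= t -> f s <= f t)
  (HfC2 : C2_pos f)
  (Hflim : is_lim f p_infty p_infty)
  (Hfr1 : forall r, 1 < r ->
     is_lim (fun s => s * Derive f s / Rpower (f s) r) p_infty 0)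
  (Hfr2 : forall r, 1 < r -> forall s t, 0 < s -> s < t ->
     Derive f t / Rpower (f t) r < Derive f s / Rpower (f s) r) :
  let rt := fun (n : nat) (t : R) =>
    a n * Derive f (V t) / Rpower (f (V t)) (a n + 1) in
  radial_profiles V rt /\
  (forall (X : Type) (d : X -> X -> R), is_metric d ->
     approx_identity_radial d V (fun n x y => rt n (d x y))).
Proof.
intros rt.
pose proof (a_pos a Hadec Halim) as Hap.
assert (HVp : forall t, 0 < t -> 0 < V t).
{ intros t Ht. pose proof (HV0 0 (Rle_refl 0)). pose proof (HVinc 0 t (Rle_refl 0) Ht). lra. }
destruct HVC1 as [HVC _].
assert (Dfpos : forall s, 0 < s -> 0 < Derive f s).
{ intros s Hs. set (t := s + 1).
  pose proof (Hfr2 2 ltac:(lra) s t Hs ltac:(unfold t; lra)) as H.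
  assert (H0 : 0 <= Derive f t) by (apply deriv_nonneg; auto; unfold t; try lra; apply HfC2; unfold t; lra).
  pose proof (exp_pos (2 * ln (f t))). pose proof (exp_pos (2 * ln (f s))).
  unfold Rpower in H.
  assert (0 <= Derive f t / exp (2 * ln (f t))).
  { unfold Rdiv. apply Rmult_le_pos; auto. left; apply Rinv_0_lt_compat; auto. }
  assert (Hq : 0 < Derive f s / exp (2 * ln (f s))) by lra.
  replace (Derive f s) with (Derive f s / exp (2 * ln (f s)) * exp (2 * ln (f s))) by (field; lra).
  apply Rmult_lt_0_compat; auto. }
assert (RP : radial_profiles V rt).
{ unfold radial_profiles. split; [|split; [|split; [|split; [|split]]]].
  - intros n. exact (g_C1 f V (a n) HfC2 HVC HVp Hfpos).
  - intros n s t Hs Hst. unfold rt.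
    pose proof (Hfr2 (a n + 1) ltac:(specialize (Hap n); lra) (V s) (V t) (HVp s Hs) (HVinc s t ltac:(lra) Hst)).
    unfold Rdiv. rewrite !Rmult_assoc. apply Rmult_lt_compat_l; auto.
  - intros r Hr. unfold rt.
    set (D := Derive f (V r)). set (L := ln (f (V r))).
    set (G := fun x => x * D / exp ((x + 1) * L)).
    assert (HG : G 0 = 0) by (unfold G; unfold Rdiv; ring).
    rewrite <- HG. apply (is_lim_seq_continuous G a 0); auto.
    apply cont_pt. apply (ex_derive_continuous G). unfold G. auto_derive.
    pose proof (exp_pos ((0 + 1) * L)). repeat split; auto; lra.
  - intros n. unfold rt.
    pose proof (Hfr1 (a n + 1) ltac:(specialize (Hap n); lra)) as H1.
    assert (H2 : is_lim (fun r => V r * Derive f (V r) / Rpower (f (V r)) (a n + 1)) p_infty 0).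
    { apply (is_lim_comp (fun s => s * Derive f s / Rpower (f s) (a n + 1)) V p_infty 0 p_infty); auto.
      exists 0; intros; discriminate. }
    apply (is_lim_scal_l _ (a n)) in H2. rewrite Rbar_mult_0_r in H2.
    revert H2. apply is_lim_ext. intros y. unfold Rdiv. ring.
  - intros n m Hmn r1 r2 Hr1 Hr12.
    pose proof (a_lt a Hadec m n Hmn) as Hnm. pose proof (Hap n). pose proof (Hap m).
    assert (Hid : forall r, 0 < r -> rt n r / rt m r = a n / a m * Rpower (f (V r)) (a m - a n)).
    { intros r Hr. unfold rt, Rpower. pose proof (Dfpos (V r) (HVp r Hr)).
      set (L := ln (f (V r))).
      replace ((a m + 1) * L) with ((a m - a n) * L + (a n + 1) * L) by ring.
      rewrite exp_plus. pose proof (exp_pos ((a m - a n) * L)). pose proof (exp_pos ((a n + 1) * L)).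
      field. repeat split; lra. }
    rewrite !Hid by lra.
    apply Rmult_le_compat_l. unfold Rdiv. apply Rmult_le_pos; [lra|left; apply Rinv_0_lt_compat; lra].
    apply Rle_Rpower_l. lra. split. apply Hfpos, HVp; auto.
    apply Hfinc. apply HVp; auto. destruct (Req_dec r1 r2) as [->|Hne]. lra.
    left. apply HVinc; lra.
  - exists (fun Rr n => Rpower (f (V Rr)) (- a n)), (fun _ => 1).
    split; [|split].
    + intros Rr n HR. exact (integral f V (a n) HfC2 HVC HVp Hfpos (Hap n) HVlim Hflim Rr HR).
    + intros Rr HR. pose proof (Hfpos _ (HVp _ HR)) as HX.
      set (G := fun x => Rpower (f (V Rr)) (- x)).
      assert (HG : G 0 = 1) by (unfold G; rewrite Ropp_0; apply Rpower_O; auto).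
      rewrite <- HG. apply (is_lim_seq_continuous G a 0); auto.
      apply cont_pt. apply (ex_derive_continuous G). unfold G, Rpower. auto_derive. auto.
    + apply is_lim_const. }
split; auto.
intros X d Hd. exists rt. split; auto.
Qed.
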